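(* Fix an arbitrary execution of Algorithm $\mathrm{tree}(G)$ on $G$, and let $r$ and $F$ be as defined in the context. If $uv$ is an edge of $G$ with $d_F(u)\ge 2$, then $r(u)\ge r(v)$.
   Context: $G$ is a finite connected simple undirected graph containing a vertex $a$ with $d_G(a)\ge 2$. For a subtree $T$ of $G$ and a vertex $u$ of $T$: - $V_T(u)$ is the set of vertices $v\in V(G)\setminus V(T)$ with $uv\in E(G)$. - $E_T(u)$ is the set of edges $uv$ of $G$ with $v\in V_T(u)$. - If $|V_T(u)|=1$, then $v_T(u)$ denotes the unique vertex of $V_T(u)$. Three sets of vertices of $T$ are defined: - $W_2(T)=\{u\in V(T): |V_T(u)|\ge 2\}$. - $W_1(T)=\{u\in V(T): |V_T(u)|=1,\ |V_{T\cup E_T(u)}(v_T(u))|\ge 2\}$. - $W_0(T)=\{u\in V(T): |V_T(u)|=1,\ |V_{T\cup E_T(u)}(v_T(u))|\le 1\}$. Algorithm $\mathrm{tree}(G)$ runs as follows. 1. Start with $T=\{a\}$. 2. While $V(T)\ne V(G)$: - If $W_2(T)\ne\emptyset$, pick an arbitrary $u\in W_2(T)$. - Else, if $W_1(T)\neq\emptyset$, pick an arbitrary $u\in W_1(T)$. - Else, let $u$ be the vertex of $W_0(T)$ that joined $V(T)$ most recently. - Set $T:=T\cup E_T(u)$ (''expand $T$ at $u$''). 3. Return $T$. Now fix an execution and let $T$ be the returned spanning tree, rooted at $a$. For $v\ne a$, let $p(v)$ be the parent of $v$ in $T$. For each vertex $u$ with $d_T(u)\ge 2$, let $T_u$ be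 the tree just before the (unique) expansion at $u$. The rank $r:V(G)\to\mathbb{Z}$ is defined by $r(a)=1$ and, for each edge $uv$ of $T$ with $u=p(v)$: - $r(v)=r(u)$ if $u\in W_2(T_u)$; - $r(v)=1+\max_{w\in V(T_u)} r(w)$ otherwise. $F$ is the spanning forest obtained from $T$ by deleting every edge $uv$ with $r(u)\ne r(v)$, and $d_F(u)$ denotes the degree of $u$ in $F$. *)

(* Defs.v *)
From mathcomp Require Import all_boot.
Set Implicit Arguments. Unset Strict Implicit. Unset Printing Implicit Defensive.

(* A simple graph on a finite type V is a symmetric irreflexive relation e.
   Subtrees built by Algorithm tree(G) are determined by their vertex sets
   (the edges are those added at each expansion), so the algorithm state is
   represented by a vertex set S : {set V}. *)
Section TreeAlgo.
Variables (V : finType) (e : rel V).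

Definition outnb (S : {set V}) (u : V) : {set V} := [set v | e u v & v \notin S].

Definition W2 (S : {set V}) : {set V} := [set u in S | 1 < #|outnb S u|].
Definition W1 (S : {set V}) : {set V} :=
  [set u in S | [exists v, (outnb S u == [set v]) && (1 < #|outnb (v |: S) v|)]].
Definition W0 (S : {set V}) : {set V} :=
  [set u in S | [exists v, (outnb S u == [set v]) && (#|outnb (v |: S) v| <= 1)]].

Definition expand (S : {set V}) (u : V) : {set V} := S :|: outnb S u.

(* An execution is given by the sequence us of expansion vertices, in order.
   state a us i = vertex set of the tree after the first i expansions. *)
Definition state (a : V) (us : seq V) (i : nat) : {set V} :=
  foldl expand [set a] (take i us).

Definition join_time (a : V) (us : seq V) (v : V) : nat :=
  find (fun i => v \in state a us i) (iota 0 (size us).+1).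

Definition valid_choice (a : V) (us : seq V) (i : nat) (u : V) : bool :=
  let S := state a us i in
  if W2 S != set0 then u \in W2 S
  else if W1 S != set0 then u \in W1 S
  else (u \in W0 S) &&
       [forall w in W0 S, join_time a us w <= join_time a us u].

Definition execution (a : V) (us : seq V) : Prop :=
  (forall i, i < size us ->
     state a us i != [set: V] /\ valid_choice a us i (nth a us i)) /\
  state a us (size us) = [set: V].

Definition is_rank (a : V) (us : seq V) (r : V -> nat) : Prop :=
  r a = 1 /\
  forall i, i < size us ->
    forall v, v \in outnb (state a us i) (nth a us i) ->
      r v = if nth a us i \in W2 (state a us i) then r (nth a us i)
            else (\max_(w in state a us i) r w).+1.

Definition tedge (a : V) (us : seq V) (x y : V) : bool :=
  [exists i : 'I_(size us), (nth a us i == x) && (y \in outnb (state a us i) x)].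

(* degree of u in the forest F = T minus edges joining different ranks *)
Definition dF (a : V) (us : seq V) (r : V -> nat) (u : V) : nat :=
  #|[set w | (tedge a us u w || tedge a us w u) && (r u == r w)]|.

End TreeAlgo.

(* Main.v *)
Require Import Defs.
From mathcomp Require Import all_boot.
Set Implicit Arguments. Unset Strict Implicit. Unset Printing Implicit Defensive.

Section Proof.
Variables (V : finType) (e : rel V) (a : V) (us : seq V) (r : V -> nat).

Local Notation S i := (state e a us i).

Lemma state0 : S 0 = [set a].
Proof. by rewrite /state take0. Qed.

Lemma stateS i : i < size us -> S i.+1 = expand e (S i) (nth a us i).
Proof. by move=> H; rewrite /state (take_nth a H) foldl_rcons. Qed.

Lemma foldl_expand_sub s (T : {set V}) : T \subset foldl (expand e) T s.
Proof.
elim: s T => [|x s IH] T /=; first exact: subxx.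
apply: subset_trans (IH _); exact: subsetUl.
Qed.

Lemma state_mono i j : i <= j -> S i \subset S j.
Proof.
move=> le; rewrite /state -(subnKC le) takeD foldl_cat; exact: foldl_expand_sub.
Qed.

Lemma W2_expand (T : {set V}) u x :
  x \in W2 e (expand e T u) -> x \in T -> x \in W2 e T.
Proof.
case/setIdP=> _ Hc HxT; apply/setIdP; split=> //.
apply: leq_trans Hc _; apply: subset_leq_card; apply/subsetP=> z.
rewrite /outnb !in_set negb_or => /andP [-> /andP [-> _]] //.
Qed.

Lemma inv : execution e a us -> is_rank e a us r ->
  forall i, i <= size us -> forall x y, x \in W2 e (S i) -> y \in S i -> r y <= r x.
Proof.
move=> Hex Hr; elim=> [|i IH] Hi x y.
  rewrite state0 => /setIdP [Hx _] Hy.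
  by move: Hx Hy; rewrite !in_set1 => /eqP -> /eqP ->.
have Hi' : i < size us by [].
have [_ Hc] := Hex.1 i Hi'.
have Hrk := Hr.2 i Hi'.
rewrite /valid_choice /= in Hc.
rewrite stateS //.
set T := S i in IH Hc Hrk *; set u := nth a us i in Hc Hrk *.
case: (boolP (u \in W2 e T)) => HuW.
  have HS : forall y, y \in T -> r y <= r u := fun y Hy => IH (ltnW Hi') u y HuW Hy.
  have HN : forall z, z \in outnb e T u -> r z = r u.
    by move=> z Hz; rewrite (Hrk z Hz) HuW.
  have Hall : forall y, y \in expand e T u -> r y <= r u.
    by move=> y0; rewrite /expand in_setU => /orP [/HS // | /HN ->].
  move=> Hx Hy; apply: leq_trans (Hall y Hy) _.
  have Hx' := Hx; case/setIdP: Hx' => Hx' _.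
  move: Hx'; rewrite /expand in_setU => /orP [HxT | HxN]; last by rewrite (HN x HxN).
  have HuT : u \in T by case/setIdP: HuW.
  exact: (IH (ltnW Hi') x u (W2_expand Hx HxT) HuT).
have HW0 : W2 e T = set0.
  apply/eqP; move: Hc; case: (W2 e T == set0) => //=; by rewrite (negbTE HuW).
have Hmax : forall y, y \in T -> r y <= \max_(w in T) r w.
  by move=> y0 Hy0; apply: leq_bigmax_cond.
have HN : forall z, z \in outnb e T u -> r z = (\max_(w in T) r w).+1.
  by move=> z Hz; rewrite (Hrk z Hz) (negbTE HuW).
move=> Hx Hy.
have Hx' := Hx; case/setIdP: Hx' => Hx' _.
move: Hx'; rewrite /expand in_setU => /orP [HxT | HxN].
  by have := W2_expand Hx HxT; rewrite HW0 in_set0.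
rewrite (HN x HxN).
move: Hy; rewrite /expand in_setU => /orP [/Hmax Hy | /HN ->] //.
exact: leqW.
Qed.

End Proof.

Theorem lemma3 (V : finType) (e : rel V) (a : V) (us : seq V) (r : V -> nat) :
  symmetric e -> irreflexive e -> (forall x y, connect e x y) ->
  1 < #|[set v | e a v]| ->
  execution e a us -> is_rank e a us r ->
  forall u v, e u v -> 1 < dF e a us r u -> r v <= r u.
Proof.
move=> _ _ _ _ Hex Hr u v Huv HdF.
have [i Hi [Hu [w Hw Hrw]]] : exists2 i, i < size us &
    (nth a us i = u /\ exists2 w, w \in outnb e (state e a us i) u & r u = r w).
  move/card_gt1P: HdF => [w1 [w2 [H1 H2 Hne]]].
  move: H1 H2; rewrite !in_set => /andP [T1 /eqP R1] /andP [T2 /eqP R2].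
  case/orP: T1 => T1.
    move/existsP: T1 => [i /andP [/eqP Hi Hw]].
    by exists i => //; split => //; exists w1.
  case/orP: T2 => T2.
    move/existsP: T2 => [i /andP [/eqP Hi Hw]].
    by exists i => //; split => //; exists w2.
  move/existsP: T1 => [i /andP [/eqP Hi Hw1]].
  move/existsP: T2 => [j /andP [/eqP Hj Hw2]].
  have key : forall (k l : 'I_(size us)) x y, k < l ->
      nth a us k = x -> u \in outnb e (state e a us k) x ->
      u \in outnb e (state e a us l) y -> False.
    move=> k l x y Hkl Hk Hk1 Hl1.
    have Hin : u \in state e a us k.+1.
      by rewrite stateS // /expand in_setU Hk Hk1 orbT.
    have := subsetP (state_mono e a us Hkl) u Hin.
    by move: Hl1; rewrite in_set => /andP [_ /negbTE ->].
  case: (ltngtP i j) => Hij.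
  - by case: (key i j w1 w2 Hij Hi Hw1 Hw2).
  - by case: (key j i w2 w1 Hij Hj Hw2 Hw1).
  - have : i = j by apply: val_inj.
    by move=> E; move: Hne; rewrite -Hi -Hj E eqxx.
set T := state e a us i in Hw *.
have HuS : u \in T.
  move: (Hex.1 i Hi).2; rewrite /valid_choice /= Hu -/T.
  case: ifP => _; first by case/setIdP.
  case: ifP => _; first by case/setIdP.
  by case/andP => /setIdP [].
have Hrk := Hr.2 i Hi.
rewrite Hu -/T in Hrk.
have HuW : u \in W2 e T.
  apply/negPn/negP => HuW.
  move: Hrw; rewrite (Hrk w Hw) (negbTE HuW) => E.
  have : r u <= \max_(w in T) r w by apply: leq_bigmax_cond.
  by rewrite E ltnn.
case: (boolP (v \in T)) => HvT.
  exact: (inv Hex Hr (ltnW Hi) HuW HvT).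
have Hv : v \in outnb e T u by rewrite in_set Huv HvT.
by rewrite (Hrk v Hv) HuW.
Qed.
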